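(* Let $G$ be a graph and let $H = K_1 + G$ be the join of a single new node with $G$ (the new node adjacent to every node of $G$). If $H$ is non-graceful, then $G$ is non-supergraceful.
   Context: Graphs are finite, simple. A graceful labeling of a graph with $q$ edges is an injective map $\varphi: V \to \{0,\dots,q\}$ whose induced edge labels $|\varphi(u)-\varphi(v)|$ are pairwise distinct; a graph is graceful if it has one, non-graceful otherwise. For a graph $G$ with $p$ nodes and $q$ edges, a total labeling is a map $\varphi: V(G) \to \{1,\dots,p+q\}$ such that the $p$ node labels $\varphi(u)$ and the $q$ edge labels $|\varphi(u)-\varphi(v)|$, $uv \in E(G)$, are all pairwise distinct, so that together they form exactly $\{1,\dots,p+q\}$. $G$ is supergraceful if it admits a total labeling, and non-supergraceful otherwise. *)

(* Defs.v *)
From mathcomp Require Import all_boot.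
Set Implicit Arguments. Unset Strict Implicit. Unset Printing Implicit Defensive.

Definition simple_graph (T : finType) (e : rel T) : Prop :=
  symmetric e /\ irreflexive e.

Definition edges (T : finType) (e : rel T) : {set {set T}} :=
  [set [set u; v] | u in T, v in T & e u v].

Definition absdiff (a b : nat) : nat := maxn a b - minn a b.

Definition edge_labels_distinct (T : finType) (e : rel T) (phi : T -> nat) : Prop :=
  forall u v x y, e u v -> e x y ->
    absdiff (phi u) (phi v) = absdiff (phi x) (phi y) ->
    [set u; v] = [set x; y].

Definition graceful_labeling (T : finType) (e : rel T) (phi : T -> nat) : Prop :=
  injective phi /\ (forall u, phi u <= #|edges e|) /\ edge_labels_distinct e phi.

Definition graceful (T : finType) (e : rel T) : Prop :=
  exists phi : T -> nat, graceful_labeling e phi.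

Definition total_labeling (T : finType) (e : rel T) (phi : T -> nat) : Prop :=
  let N := #|T| + #|edges e| in
  [/\ forall u, 1 <= phi u <= N,
      injective phi,
      edge_labels_distinct e phi,
      (forall u x y, e x y -> phi u <> absdiff (phi x) (phi y)) &
      (forall k, 1 <= k <= N ->
         (exists u, phi u = k) \/ (exists x y, e x y /\ absdiff (phi x) (phi y) = k))].

Definition supergraceful (T : finType) (e : rel T) : Prop :=
  exists phi : T -> nat, total_labeling e phi.

Definition join_K1 (T : finType) (e : rel T) : rel (option T) :=
  fun a b => match a, b with
             | Some x, Some y => e x y
             | None, Some _ => true
             | Some _, None => true
             | None, None => false
             end.

(* Main.v *)
Require Import Defs.
From mathcomp Require Import all_boot.

Lemma absdiff0n n : absdiff 0 n = n.
Proof. by rewrite /absdiff max0n min0n subn0. Qed.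
Lemma absdiffn0 n : absdiff n 0 = n.
Proof. by rewrite /absdiff maxn0 minn0 subn0. Qed.

Lemma imset_Some2 (T : finType) (u v : T) :
  Some @: [set u; v] = [set Some u; Some v].
Proof. by rewrite imsetU1 imset_set1. Qed.

Lemma card_edges_join (T : finType) (e : rel T) :
  #|T| + #|edges e| <= #|edges (join_K1 e)|.
Proof.
set A := [set [set Some x | x in S] | S : {set T} in edges e].
set B := [set [set None; Some x] | x in T].
have cA : #|A| = #|edges e| by rewrite card_imset //; apply: imset_inj; exact: Some_inj.
have cB : #|B| = #|T|.
  rewrite card_imset // => x y H.
  have : Some x \in [set None; Some y] by rewrite -H !inE eqxx orbT.
  by rewrite !inE => /orP [//|/eqP [->]].
have dAB : A :&: B = set0.
  apply/setP => S; rewrite !inE.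
  apply/negP => /andP [/imsetP [S' _ ->] /imsetP [x _ H]].
  have : None \in Some @: S' by rewrite H !inE eqxx.
  by case/imsetP.
have sub : A :|: B \subset edges (join_K1 e).
  apply/subsetP => S; rewrite inE => /orP [/imsetP [S' /imset2P [u v Hu Hv ->] ->]|/imsetP [x _ ->]].
  - rewrite imset_Some2; apply/imset2P; exists (Some u) (Some v) => //.
    rewrite !inE /= in Hv *. exact: Hv.
  - by apply/imset2P; exists None (Some x); rewrite ?inE.
have := subset_leq_card sub.
by rewrite cardsU dAB cards0 subn0 cA cB addnC.
Qed.

Theorem theorem7p3 (T : finType) (e : rel T) :
  simple_graph e ->
  ~ graceful (join_K1 e) ->
  ~ supergraceful e.
Proof.
move=> _ Hng [phi [Hr Hinj Hd H4 _]]; apply: Hng.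
pose psi := fun a : option T => if a is Some x then phi x else 0.
exists psi; split; [|split].
- case=> [x|] [y|] //= H.
  + by rewrite (Hinj _ _ H).
  + by move: (Hr x); rewrite H.
  + by move: (Hr y); rewrite -H.
- case=> [x|] /=; last by [].
  have /andP [_ H] := Hr x.
  exact: leq_trans H (card_edges_join _ e).
- case=> [u|] [v|] [x|] [y|] /= Huv Hxy //;
    rewrite ?absdiff0n ?absdiffn0 => H;
    first [ by rewrite -!imset_Some2 (Hd _ _ _ _ Huv Hxy H)
          | by case: (H4 _ _ _ Huv (esym H))
          | by case: (H4 _ _ _ Hxy H)
          | by rewrite (Hinj _ _ H)
          | by rewrite (Hinj _ _ H) setUC
          ].
Qed.
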